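(* For each positive integer $k$, the graph $K_{k+1,\lfloor (k+1)^2/4\rfloor}$ admits a balanced $k$-page embedding.
   Context: A book with $k$ pages consists of a line (the spine) and $k$ half-planes (the pages) whose common boundary is the spine. A $k$-page embedding places all vertices on the spine and each edge inside a single page with no crossings. In $K_{k+1,s}$ call the $k+1$ vertices of degree $s$ black and the $s$ vertices of degree $k+1$ white. The load of a white vertex $v$ in a page is the number of edges incident with $v$ drawn in that page. A $k$-page embedding of $K_{k+1,s}$ is balanced if every white vertex has load exactly $1$ in $k-1$ of the pages (hence load $2$ in the remaining page). *)

(* Defs.v *)
From mathcomp Require Import all_boot.
Set Implicit Arguments. Unset Strict Implicit. Unset Printing Implicit Defensive.

(* Vertices of K_{k+1,s}: black vertices 'I_(k+1) (inl), white vertices 'I_s (inr).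
   Every edge joins a black vertex i and a white vertex j; we identify the edge
   with the pair (i, j). *)
Definition Kvertex (k s : nat) := ('I_k.+1 + 'I_s)%type.

(* Two edges with spine positions {a,b} and {c,d} cross (in the same page)
   iff their endpoints strictly interleave along the spine. *)
Definition interleave (a b c d : nat) : bool :=
  let: (l1, r1) := (minn a b, maxn a b) in
  let: (l2, r2) := (minn c d, maxn c d) in
  ((l1 < l2) && (l2 < r1) && (r1 < r2)) || ((l2 < l1) && (l1 < r2) && (r2 < r1)).

Definition book_embedding (k s : nat) (pos : Kvertex k s -> nat)
    (page : 'I_k.+1 -> 'I_s -> 'I_k) : Prop :=
  injective pos /\
  forall (i1 i2 : 'I_k.+1) (j1 j2 : 'I_s),
    page i1 j1 = page i2 j2 ->
    ~~ interleave (pos (inl i1)) (pos (inr j1)) (pos (inl i2)) (pos (inr j2)).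

Definition load (k s : nat) (page : 'I_k.+1 -> 'I_s -> 'I_k) (j : 'I_s) (p : 'I_k)
  : nat := #|[set i : 'I_k.+1 | page i j == p]|.

Definition balanced (k s : nat) (page : 'I_k.+1 -> 'I_s -> 'I_k) : Prop :=
  forall j : 'I_s, #|[set p : 'I_k | load page j p == 1]| = k.-1.

(* Main.v *)
Require Import Defs.
From mathcomp Require Import all_boot zify.

Definition tri (A : nat -> nat) x a b :=
  (a < b /\ A a + x.+1 <= A b) \/ (a = b /\ A a = A b) \/ (b < a /\ A b + x.+1 <= A a).

Lemma triP A x (hA : forall a b, a < b -> A a + x.+1 <= A b) a b : tri A x a b.
Proof.
rewrite /tri; case: (ltngtP a b) => h; [left|right;right|right;left]; split => //; auto.
Qed.

Ltac crush :=
  repeat (case: ifP => ?); intros;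
  repeat match goal with H : _ \/ _ |- _ => destruct H as [H|H] end;
  repeat match goal with H : _ /\ _ |- _ => destruct H end;
  subst; lia.

Section S.
Variables (x : nat) (A : nat -> nat).
Definition posB i := if i <= x then i else A (i - x) - 1.
Definition pageB i t j := if i <= x then (if i <= j then t + i else t + i - 1)
   else (if i - x <= t then i - x - 1 else x - 1 + (i - x)).
Definition pre1 t j q :=
  if q < t then x + q + 1 else if q <= t + j then q - t else if q < t + x then q - t + 1 else q + 1.

Hypotheses (x0 : 0 < x) (hA : forall a b, a < b -> A a + x.+1 <= A b) (hA0 : x.+1 <= A 0).

Lemma P0 a : x.+1 <= A a.
Proof. case: a => [//|a]; have := hA 0 a.+1 is_true_true; lia. Qed.

Lemma posW_inj t1 t2 j1 j2 : j1 < x -> j2 < x -> A t1 + j1 = A t2 + j2 -> t1 = t2 /\ j1 = j2.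
Proof. have := @triP A x hA t1 t2; rewrite /tri; crush. Qed.

Lemma posB_inj i1 i2 : posB i1 = posB i2 -> i1 = i2.
Proof.
rewrite /posB; have := P0 (i1 - x); have := P0 (i2 - x);
have := @triP A x hA (i1 - x) (i2 - x); rewrite /tri; crush.
Qed.

Lemma posBW i t j : j < x -> posB i <> A t + j.
Proof.
rewrite /posB; have := P0 (i - x); have := P0 t;
have := @triP A x hA (i - x) t; rewrite /tri; crush.
Qed.

Lemma page_bound K i t j : x <= K -> i < K -> t < K - x -> j < x -> pageB i t j < K.-1.
Proof. rewrite /pageB; crush. Qed.

Lemma pre1_bound K t j q : x <= K -> t < K - x -> j < x -> q < K.-1 -> pre1 t j q < K.
Proof. rewrite /pre1; crush. Qed.

Lemma pre1_spec K i t j q : x <= K -> t < K - x -> j < x -> i < K -> q < K.-1 -> q <> t + j ->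
  (pageB i t j == q) = (i == pre1 t j q).
Proof.
move=> *; apply/eqP/eqP; rewrite /pageB /pre1; crush.
Qed.

Lemma pre2_spec K i t j : x <= K -> t < K - x -> j < x -> i < K ->
  (pageB i t j == t + j) = (i == j) || (i == j.+1).
Proof.
move=> *; rewrite /pageB; repeat (case: ifP => ?); apply/idP/idP => H; lia.
Qed.
Lemma core i1 i2 t1 t2 j1 j2 (hj1 : j1 < x) (hj2 : j2 < x) :
  pageB i1 t1 j1 = pageB i2 t2 j2 ->
  ~~ interleave (posB i1) (A t1 + j1) (posB i2) (A t2 + j2).
Proof.
have T := @triP A x hA.
have P0 : forall a, x.+1 <= A a.
  move=> a; case: a => [//|a]; have := hA 0 a.+1 is_true_true; lia.
rewrite /pageB /posB /interleave.
have := P0 t1; have := P0 t2; have := T t1 t2.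
case: (leqP i1 x) => h1; case: (leqP i2 x) => h2.
- rewrite /tri; crush.
- have := T (i2 - x) t1; have := T (i2 - x) t2; have := P0 (i2 - x). rewrite /tri; crush.
- have := T (i1 - x) t1; have := T (i1 - x) t2; have := P0 (i1 - x). rewrite /tri; crush.
- move=> _ _ _ Hp.
  have Amle : forall a b, a <= b -> A a <= A b.
    move=> a b; rewrite leq_eqVlt => /orP [/eqP -> //|/hA]; lia.
  have : (i1 = i2) \/ (i1 - x <= t1 /\ t2 < i2 - x /\ i1 - x = i2 - x + x)
      \/ (i2 - x <= t2 /\ t1 < i1 - x /\ i2 - x = i1 - x + x).
    by move: Hp; repeat case: ifP => ?; lia.
  case=> [->|[[a [b c]]|[a [b c]]]].
  + lia.
  + have := hA _ _ b; have := hA (i2 - x) (i1 - x) ltac:(lia); have := Amle _ _ a; have := P0 (i2 - x).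
    move=> *; lia.
  + have := hA _ _ b; have := hA (i1 - x) (i2 - x) ltac:(lia); have := Amle _ _ a; have := P0 (i1 - x).
    move=> *; lia.
Qed.
End S.

Lemma sq_bound K : K ^ 2 %/ 4 <= (K - K %/ 2) * (K %/ 2).
Proof. nia. Qed.

Definition Af x t := t.+1 * x.+1.
Lemma Af_mono x a b : a < b -> Af x a + x.+1 <= Af x b.
Proof. rewrite /Af => h; nia. Qed.

Theorem proposition19 (k : nat) (hk : 0 < k) :
  exists (pos : Kvertex k ((k.+1 ^ 2) %/ 4) -> nat)
         (page : 'I_k.+1 -> 'I_((k.+1 ^ 2) %/ 4) -> 'I_k),
    book_embedding pos page /\ balanced page.
Proof.
case: k hk => [//|k] _.
pose x := k.+2 %/ 2.
have x0 : 0 < x by rewrite /x; lia.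
have xK : x <= k.+2 by rewrite /x; lia.
have hA := @Af_mono x.
have hA0 : x.+1 <= Af x 0 by rewrite /Af mul1n.
have tb : forall w : 'I_(k.+2 ^ 2 %/ 4), w %/ x < k.+2 - x.
  move=> w; rewrite ltn_divLR //; apply: (leq_trans (ltn_ord w)).
  by have := sq_bound k.+2; rewrite -/x mulnC.
have jb : forall w : 'I_(k.+2 ^ 2 %/ 4), w %% x < x by move=> w; rewrite ltn_pmod.
pose pos (v : Kvertex k.+1 (k.+2 ^ 2 %/ 4)) : nat :=
  match v with inl i => posB x (Af x) i | inr w => Af x (w %/ x) + w %% x end.
pose page (i : 'I_k.+2) (w : 'I_(k.+2 ^ 2 %/ 4)) : 'I_k.+1 :=
  inord (pageB x i (w %/ x) (w %% x)).
have pageE : forall i w, val (page i w) = pageB x i (w %/ x) (w %% x).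
  move=> i w; apply: inordK.
  exact: (@page_bound x (Af x) x0 hA0 k.+2 i (w %/ x) (w %% x) xK (ltn_ord i) (tb w) (jb w)).
exists pos, page; split; [split|].
- move=> [i1|w1] [i2|w2]; rewrite /pos => h.
  + by congr inl; apply: val_inj; exact: (@posB_inj x (Af x) x0 hA hA0 i1 i2 h).
  + by exfalso; apply: (@posBW x (Af x) x0 hA hA0 _ _ _ (jb w2) h).
  + by exfalso; apply: (@posBW x (Af x) x0 hA hA0 _ _ _ (jb w1) (esym h)).
  + have [ht hj] := @posW_inj x (Af x) x0 hA hA0 _ _ _ _ (jb w1) (jb w2) h.
    congr inr; apply: val_inj => /=.
    by rewrite (divn_eq w1 x) (divn_eq w2 x) ht hj.
- move=> i1 i2 j1 j2 /(congr1 val); rewrite !pageE => h.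
  exact: (@core x (Af x) x0 hA hA0 _ _ _ _ _ _ (jb j1) (jb j2) h).
- move=> w.
  have loadE : forall p : 'I_k.+1, load page w p = if val p == w %/ x + w %% x then 2 else 1.
    move=> p; rewrite /load.
    case: eqP => hp.
    + have -> : [set i : 'I_k.+2 | page i w == p] = [set inord (w %% x); inord (w %% x).+1].
        apply/setP => i; rewrite !inE -!val_eqE pageE hp /= !inordK; last 2 first.
        * by have := jb w; lia.
        * by have := jb w; lia.
        exact: (@pre2_spec x (Af x) x0 hA0 k.+2 i _ _ xK (tb w) (jb w) (ltn_ord i)).
      rewrite cards2 -val_eqE /= !inordK; first by rewrite eqn_leq ltnn andbF.
      * by have := jb w; lia.
      * by have := jb w; lia.
    + have pb := @pre1_bound x (Af x) x0 hA0 k.+2 (w %/ x) (w %% x) p xK (tb w) (jb w) (ltn_ord p).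
      have -> : [set i : 'I_k.+2 | page i w == p] = [set inord (pre1 x (w %/ x) (w %% x) p)].
        apply/setP => i; rewrite !inE -!val_eqE pageE /= inordK //.
        exact: (@pre1_spec x (Af x) x0 hA0 k.+2 i _ _ p xK (tb w) (jb w) (ltn_ord i) (ltn_ord p) hp).
      by rewrite cards1.
  have -> : [set p : 'I_k.+1 | load page w p == 1] = [set~ (inord (w %/ x + w %% x) : 'I_k.+1)].
    apply/setP => p; rewrite !inE loadE -val_eqE /= inordK; first by case: (nat_of_ord p == _).
    have := @page_bound x (Af x) x0 hA0 k.+2 x (w %/ x) (w %% x) xK ltac:(lia) (tb w) (jb w).
    by rewrite /pageB leqnn; case: ifP => /=; lia.
  by rewrite cardsC1 card_ord.
Qed.
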